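(* Let $\mathbb V\subset\mathbb W$ be Hilbert spaces with bounded inclusion, $\mathbb V$ dense in $\mathbb W$ and $\mathbb V$ separable. Let $\mathcal L_N,\mathcal L:\mathbb V\to\mathbb W$ be bounded operators that are self-adjoint (as operators on $\mathbb W$ with dense domain $\mathbb V$) and have pure-point spectrum. Let $\lambda$ be an eigenvalue of $\mathcal L$ of finite geometric multiplicity and $\delta>0$ such that $\lambda$ is at distance more than $3\delta$ from all other elements of the spectrum of $\mathcal L$. Suppose there exists $N_0=N_0(\lambda,\delta)$ such that for $\delta\le|z-\lambda|\le2\delta$ and $N>N_0$, $z\,\mathrm{id}-\mathcal L_N$ is invertible on $\mathbb W$, and $$\|(z\,\mathrm{id}-\mathcal L)^{-1}(\mathcal L-\mathcal L_N)v\|_{\mathbb W}\to0,\qquad\|(z\,\mathrm{id}-\mathcal L_N)^{-1}(\mathcal L-\mathcal L_N)u\|_{\mathbb W}\to0$$ as $N\to\infty$, uniformly in $z$ with $\delta\le|z-\lambda|\le2\delta$, for all $\mathbb W$-normalized eigenfunctions $v$ of $\mathcal L_N$ and $u$ of $\mathcal L$ associated with eigenvalues lying in $\{z\in\mathbb C:|z-\lambda|\le\delta\}$. Then there exists $N_0'$ such that for $N>N_0'$ the geometric multiplicity of $\lambda$ equals the sum of the geometric multiplicities of the eigenvalues $\lambda'$ of $\mathcal L_N$ satisfying $|\lambda'-\lambda|<\delta$. *)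

(* Defs.v *)
(* complex scalars are R[i] (mathcomp-real-closed complex)
   over an arbitrary R : realType, i.e. the complex numbers.
   Hilbert spaces are lmodTypes over R[i] equipped with an inner product. *)
From mathcomp Require Import all_boot all_order all_algebra.
From mathcomp Require Export complex.
From mathcomp Require Export reals.
Set Implicit Arguments. Unset Strict Implicit. Unset Printing Implicit Defensive.
Import Order.TTheory GRing.Theory Num.Theory.
Local Open Scope ring_scope.

Section Hilbert.
Variable R : realType.
Local Notation C := (R[i]).

Definition is_inner_product (W : lmodType C) (ip : W -> W -> C) : Prop :=
  [/\ (forall (a : C) (x y z : W), ip (a *: x + y) z = a * ip x z + ip y z),
      (forall x y : W, ip y x = (ip x y)^*),
      (forall x : W, 0 <= ip x x) &
      (forall x : W, ip x x = 0 -> x = 0)].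

Definition hnorm (W : lmodType C) (ip : W -> W -> C) (x : W) : C :=
  sqrtC (ip x x).

Definition cauchy_seq (W : lmodType C) (ip : W -> W -> C) (u : nat -> W) : Prop :=
  forall eps : C, 0 < eps -> exists N : nat, forall m n : nat,
    (N <= m)%N -> (N <= n)%N -> hnorm ip (u m - u n) < eps.

Definition converges_to (W : lmodType C) (ip : W -> W -> C) (u : nat -> W) (x : W) : Prop :=
  forall eps : C, 0 < eps -> exists N : nat, forall n : nat,
    (N <= n)%N -> hnorm ip (u n - x) < eps.

Definition is_hilbert (W : lmodType C) (ip : W -> W -> C) : Prop :=
  is_inner_product ip /\
  (forall u : nat -> W, cauchy_seq ip u -> exists x : W, converges_to ip u x).

Definition separable (V : lmodType C) (ip : V -> V -> C) : Prop :=
  exists d : nat -> V, forall (v : V) (eps : C), 0 < eps ->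
    exists n : nat, hnorm ip (v - d n) < eps.

Definition bounded_op (V W : lmodType C) (ipV : V -> V -> C) (ipW : W -> W -> C)
  (f : V -> W) : Prop :=
  exists c : C, forall v : V, hnorm ipW (f v) <= c * hnorm ipV v.

Definition dense_range (V W : lmodType C) (ipW : W -> W -> C) (f : V -> W) : Prop :=
  forall (w : W) (eps : C), 0 < eps -> exists v : V, hnorm ipW (w - f v) < eps.

(* Operators L : V -> W, viewed as operators in W with domain i(V). *)

(* self-adjoint: symmetric, and the domain of the adjoint is contained in
   (hence equal to) the domain i(V) *)
Definition self_adjoint (V W : lmodType C) (ipW : W -> W -> C) (i : V -> W)
  (L : V -> W) : Prop :=
  (forall u v : V, ipW (L u) (i v) = ipW (i u) (L v)) /\
  (forall w w' : W, (forall v : V, ipW (L v) w = ipW (i v) w') ->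
     exists u : V, i u = w).

Definition shiftop (V W : lmodType C) (i : V -> W) (L : V -> W) (z : C) (v : V) : W :=
  z *: i v - L v.

Definition invertible_at (V W : lmodType C) (ipW : W -> W -> C) (i : V -> W)
  (L : V -> W) (z : C) : Prop :=
  exists g : W -> V, cancel (shiftop i L z) g /\ cancel g (shiftop i L z) /\
    bounded_op ipW ipW (fun w => i (g w)).

Definition in_spectrum (V W : lmodType C) (ipW : W -> W -> C) (i : V -> W)
  (L : V -> W) (z : C) : Prop := ~ invertible_at ipW i L z.

Definition is_eigenvector (V W : lmodType C) (i : V -> W) (L : V -> W)
  (z : C) (v : V) : Prop := v != 0 /\ L v = z *: i v.

Definition is_eigenvalue (V W : lmodType C) (i : V -> W) (L : V -> W) (z : C) : Prop :=
  exists v : V, is_eigenvector i L z v.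

(* pure-point spectrum: the eigenvectors span a dense subspace of W
   (equivalently W has an orthonormal basis of eigenvectors) *)
Definition pure_point (V W : lmodType C) (ipW : W -> W -> C) (i : V -> W)
  (L : V -> W) : Prop :=
  forall (w : W) (eps : C), 0 < eps ->
    exists (n : nat) (f : 'I_n -> V) (mu c : 'I_n -> C),
      (forall k, L (f k) = mu k *: i (f k)) /\
      hnorm ipW (w - \sum_(k < n) c k *: i (f k)) < eps.

Definition lin_indep (V : lmodType C) (n : nat) (f : 'I_n -> V) : Prop :=
  forall c : 'I_n -> C, \sum_(k < n) c k *: f k = 0 -> forall k, c k = 0.

Definition geom_mult (V W : lmodType C) (i : V -> W) (L : V -> W)
  (z : C) (m : nat) : Prop :=
  (exists f : 'I_m -> V, (forall k, L (f k) = z *: i (f k)) /\ lin_indep f) /\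
  (forall f : 'I_m.+1 -> V, (forall k, L (f k) = z *: i (f k)) -> ~ lin_indep f).

End Hilbert.

(* Main.v *)
Require Import Defs.
From mathcomp Require Import all_boot all_order all_algebra.
From mathcomp Require Import complex reals.
From mathcomp Require Import ring lra zify.
From Stdlib Require Import Classical.
Import Order.TTheory GRing.Theory Num.Theory.
Local Open Scope ring_scope.

Set Implicit Arguments. Unset Strict Implicit. Unset Printing Implicit Defensive.

Lemma ker_exists (F : fieldType) p q (M : 'M[F]_(p,q)) : (q < p)%N ->
  exists a : 'rV_p, a != 0 /\ a *m M = 0.
Proof.
move=> qp.
have : kermx M != 0.
  rewrite kermx_eq0 /row_free; apply/negP => /eqP h.
  by have := rank_leq_col M; rewrite h leqNgt qp.
move=> hK.
have [j hj] : exists j, row j (kermx M) != 0.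
  apply/existsP; apply: contraNT hK => /existsPn hn.
  by apply/eqP/row_matrixP => j; rewrite row0; apply/eqP; have := hn j; rewrite negbK.
exists (row j (kermx M)); split => //.
by rewrite -row_mul mulmx_ker row0.
Qed.

Lemma ac4 (M : zmodType) (a b c d : M) : a - b + c - d = a - d + c - b.
Proof. by rewrite addrAC [a - b - d]addrAC [RHS]addrAC. Qed.

Lemma ex_max (P : nat -> Prop) m : P 0%N -> (forall n, P n -> (n <= m)%N) ->
  exists n, P n /\ forall k, P k -> (k <= n)%N.
Proof.
move=> P0 Pm.
suff: forall d n, P n -> (m - n <= d)%N -> exists n, P n /\ forall k, P k -> (k <= n)%N.
  by move=> /(_ m 0%N P0); apply; rewrite subn0.
elim=> [|d IH] n Pn hd.
  exists n; split => // k Pk; apply: leq_trans (Pm _ Pk) _.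
  by rewrite -subn_eq0 -leqn0.
have [[k [Pk nk]]|hn] := classic (exists k, P k /\ (n < k)%N).
  apply: (IH k Pk); have := Pm _ Pk; lia.
exists n; split => // k Pk; rewrite leqNgt; apply/negP => nk.
by apply: hn; exists k.
Qed.

Section IP.
Variables (R : realType) (U : lmodType R[i]) (ip : U -> U -> R[i]).
Hypothesis Hip : is_inner_product ip.

Lemma ipDZl a x y z : ip (a *: x + y) z = a * ip x z + ip y z.
Proof. by case: Hip => h _ _ _; apply: h. Qed.
Lemma ipC x y : ip y x = (ip x y)^*.
Proof. by case: Hip => _ h _ _; apply: h. Qed.
Lemma ip_ge0 x : 0 <= ip x x.
Proof. by case: Hip => _ _ h _; apply: h. Qed.
Lemma ip_eq0 x : ip x x = 0 -> x = 0.
Proof. by case: Hip => _ _ _ h; apply: h. Qed.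

Lemma ip0l z : ip 0 z = 0.
Proof.
have := ipDZl 1 0 0 z; rewrite scaler0 addr0 mul1r => /eqP.
by rewrite -subr_eq0 opprD addrA subrr sub0r oppr_eq0 => /eqP.
Qed.
Lemma ipDl x y z : ip (x + y) z = ip x z + ip y z.
Proof. by rewrite -[x]scale1r ipDZl mul1r scale1r. Qed.
Lemma ipZl a x z : ip (a *: x) z = a * ip x z.
Proof. by rewrite -[_ *: _]addr0 ipDZl ip0l addr0. Qed.
Lemma ipNl x z : ip (- x) z = - ip x z.
Proof. by rewrite -scaleN1r ipZl mulN1r. Qed.
Lemma ipBl x y z : ip (x - y) z = ip x z - ip y z.
Proof. by rewrite ipDl ipNl. Qed.
Lemma ip0r z : ip z 0 = 0.
Proof. by rewrite ipC ip0l conjC0. Qed.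
Lemma ipDr x y z : ip z (x + y) = ip z x + ip z y.
Proof. by rewrite ipC ipDl rmorphD /= -!ipC. Qed.
Lemma ipZr a x z : ip z (a *: x) = a^* * ip z x.
Proof. by rewrite ipC ipZl rmorphM /= -!ipC. Qed.
Lemma ipNr x z : ip z (- x) = - ip z x.
Proof. by rewrite -scaleN1r ipZr rmorphN1 mulN1r. Qed.
Lemma ipBr x y z : ip z (x - y) = ip z x - ip z y.
Proof. by rewrite ipDr ipNr. Qed.
Lemma ipsuml (I : Type) (s : seq I) (P : pred I) (F : I -> U) z :
  ip (\sum_(k <- s | P k) F k) z = \sum_(k <- s | P k) ip (F k) z.
Proof.
elim/big_rec2: _ => [|k a b _ <-]; first by rewrite ip0l.
by rewrite ipDl.
Qed.
Lemma ipsumr (I : Type) (s : seq I) (P : pred I) (F : I -> U) z :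
  ip z (\sum_(k <- s | P k) F k) = \sum_(k <- s | P k) ip z (F k).
Proof.
elim/big_rec2: _ => [|k a b _ <-]; first by rewrite ip0r.
by rewrite ipDr.
Qed.
Lemma ip_real x : ip x x \is Num.real.
Proof. exact: ger0_real (ip_ge0 x). Qed.
Lemma ipxx_conj x : (ip x x)^* = ip x x.
Proof. exact: geC0_conj (ip_ge0 x). Qed.

Definition nm x := sqrtC (ip x x).
Lemma nm_ge0 x : 0 <= nm x.
Proof. by rewrite /nm sqrtC_ge0 ip_ge0. Qed.
Lemma nm_sq x : nm x ^+ 2 = ip x x.
Proof. exact: sqrtCK. Qed.
Lemma nm0 : nm 0 = 0.
Proof. by rewrite /nm ip0l sqrtC0. Qed.
Lemma nmN x : nm (- x) = nm x.
Proof. by rewrite /nm ipNl ipNr opprK. Qed.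
Lemma nm_eq0 x : nm x = 0 -> x = 0.
Proof. by move=> h; apply: ip_eq0; rewrite -nm_sq h expr0n. Qed.
Lemma nm_real x : nm x \is Num.real.
Proof. exact: ger0_real (nm_ge0 x). Qed.

Lemma CS2 x y : `|ip x y| ^+ 2 <= ip x x * ip y y.
Proof.
have [->|y0] := eqVneq y 0; first by rewrite ip0r ip0l normr0 expr0n mulr0.
have py : ip y y != 0 by apply/eqP=> /ip_eq0; apply/eqP.
set a := ip x y / ip y y.
have := ip_ge0 (x - a *: y).
rewrite ipBl !ipBr !ipZl !ipZr.
have ha : a^* = ip y x / ip y y by rewrite /a rmorphM /= fmorphV /= ipxx_conj -ipC.
rewrite ha normCK.
have -> : ip x y * (ip x y)^* = ip x y * ip y x by rewrite -ipC.
rewrite /a.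
have e : ip x x - ip y x / ip y y * ip x y - (ip x y / ip y y * ip y x - ip x y / ip y y * (ip y x / ip y y * ip y y))
  = (ip x x * ip y y - ip x y * ip y x) / ip y y.
  by field.
rewrite e pmulr_lge0 ?subr_ge0 //.
by rewrite invr_gt0 lt_def py ip_ge0.
Qed.

Lemma CS x y : `|ip x y| <= nm x * nm y.
Proof.
rewrite -ler_sqr ?nnegrE ?mulr_ge0 ?nm_ge0 ?normr_ge0 //.
by rewrite exprMn !nm_sq CS2.
Qed.

Lemma dd_le (d : R[i]) : d + d^* <= 2 * `|d|.
Proof.
have -> : d + d^* = 2 * 'Re d by rewrite ReE mulrC divfK // pnatr_eq0.
rewrite ler_pM2l ?ltr0n //.
apply: le_trans (real_ler_norm (Creal_Re d)) _.
by have [] := leif_normC_Re_Creal d.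
Qed.

Lemma ip_expand x y : ip (x + y) (x + y) = ip x x + ip y y + (ip x y + (ip x y)^*).
Proof. by rewrite ipDl !ipDr -ipC; ring. Qed.

Lemma nmD x y : nm (x + y) <= nm x + nm y.
Proof.
rewrite -ler_sqr ?nnegrE ?addr_ge0 ?nm_ge0 //.
rewrite nm_sq ip_expand sqrrD !nm_sq.
have h : ip x y + (ip x y)^* <= nm x * nm y *+ 2.
  rewrite -mulr_natl; apply: le_trans (dd_le _) _.
  by rewrite ler_pM2l ?ltr0n // CS.
rewrite [ip x x + _ *+ 2 + _]addrAC lerD2l.
by [].
Qed.

Lemma nmB x y : nm (x - y) <= nm x + nm y.
Proof. by rewrite -(nmN y) nmD. Qed.

Lemma nmZ a x : nm (a *: x) = `|a| * nm x.
Proof.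
apply/eqP; rewrite -(@eqrXn2 _ 2) ?mulr_ge0 ?nm_ge0 ?normr_ge0 //.
by rewrite exprMn !nm_sq ipZl ipZr normCK; apply/eqP; ring.
Qed.

Definition ON (b : seq U) :=
  uniq b /\ {in b &, forall y y', ip y y' = (y == y')%:R}.
Definition proj (b : seq U) x := \sum_(y <- b) ip x y *: y.

Lemma ip_comb_mem b (c : U -> R[i]) y0 : ON b -> y0 \in b ->
  ip (\sum_(y <- b) c y *: y) y0 = c y0.
Proof.
move=> [ub hb] y0b.
rewrite ipsuml (bigD1_seq y0) //= ipZl hb // eqxx mulr1 big_seq_cond big1 ?addr0 //.
by move=> y /andP[yb /negPf ne]; rewrite ipZl hb // ne mulr0.
Qed.

Lemma ip_proj b x y0 : ON b -> y0 \in b -> ip (proj b x) y0 = ip x y0.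
Proof. exact: ip_comb_mem. Qed.

Lemma ip_res b x y0 : ON b -> y0 \in b -> ip (x - proj b x) y0 = 0.
Proof. by move=> hb hy; rewrite ipBl ip_proj // subrr. Qed.

Lemma ip_res_span b x e : ON b -> e = proj b e -> ip (x - proj b x) e = 0.
Proof.
move=> hb ->; rewrite /proj ipsumr big_seq big1 // => y yb.
by rewrite ipZr ip_res // mulr0.
Qed.

Lemma ON_indep b n : ON b -> (n <= size b)%N ->
  lin_indep (fun k : 'I_n => nth 0 b k).
Proof.
move=> [ub hb] nb c hc j.
have := congr1 (fun v => ip v (nth 0 b j)) hc; rewrite /= ip0l ipsuml.
rewrite (bigD1 j) //= big1 ?addr0.
  by rewrite ipZl hb ?eqxx ?mulr1 // mem_nth // (leq_trans (ltn_ord j)).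
move=> k kj; rewrite ipZl hb ?mem_nth ?(leq_trans (ltn_ord _)) //.
by rewrite nth_uniq ?(leq_trans (ltn_ord _)) // (inj_eq val_inj) (negPf kj) mulr0.
Qed.

Lemma proj_ord b x : proj b x = \sum_(l < size b) ip x (nth 0 b l) *: nth 0 b l.
Proof. by rewrite /proj (big_nth 0) big_mkord. Qed.

Lemma LA1 b p (f : 'I_p -> U) : ON b -> (size b < p)%N ->
  (forall j, f j = proj b (f j)) -> ~ lin_indep f.
Proof.
move=> hb sp hf hind.
pose M := \matrix_(j < p, l < size b) ip (f j) (nth 0 b l).
have [a [a0 aM]] := ker_exists M sp.
have hs : \sum_(j < p) a 0 j *: f j = 0.
  rewrite (eq_bigr (fun j => a 0 j *: proj b (f j))); last by move=> j _; rewrite -hf.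
  rewrite (eq_bigr (fun j => \sum_(l < size b) (a 0 j * M j l) *: nth 0 b l)); last first.
    move=> j _; rewrite proj_ord scaler_sumr; apply: eq_bigr => l _.
    by rewrite mxE scalerA.
  rewrite exchange_big /= big1 // => l _.
  rewrite -scaler_suml.
  move/matrixP: aM => /(_ 0 l); rewrite !mxE => ->.
  by rewrite scale0r.
apply/negP: a0; rewrite negbK; apply/eqP/rowP => j.
by rewrite mxE (hind _ hs j).
Qed.

Lemma counting p (a : 'I_p -> U) b rho : ON b ->
  (forall j k, ip (a j) (a k) = (j == k)%:R) ->
  (forall j, nm (a j - proj b (a j)) <= rho) -> p%:R * rho < 1 ->
  (p <= size b)%N.
Proof.
move=> hb ha hr hp; rewrite leqNgt; apply/negP => sp.
pose M := \matrix_(j < p, l < size b) ip (a j) (nth 0 b l).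
have [al [al0 aM]] := ker_exists M sp.
pose w := \sum_(j < p) al 0 j *: a j.
have wb : forall l : 'I_(size b), ip w (nth 0 b l) = 0.
  move=> l; rewrite ipsuml.
  move/matrixP: aM => /(_ 0 l); rewrite !mxE => h; apply: etrans h.
  by apply: eq_bigr => j _; rewrite ipZl mxE.
have wp : forall x, ip w (proj b x) = 0.
  move=> x; rewrite proj_ord ipsumr big1 // => l _.
  by rewrite ipZr wb mulr0.
have wa : forall k, ip w (a k) = al 0 k.
  move=> k; rewrite ipsuml (bigD1 k) //= big1 ?addr0.
    by rewrite ipZl ha eqxx mulr1.
  by move=> j jk; rewrite ipZl ha (negPf jk) mulr0.
have rho0 : 0 <= rho by apply: le_trans (nm_ge0 _) (hr (Ordinal (leq_ltn_trans (leq0n _) sp))).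
have e1 : ip w w = \sum_(j < p) (al 0 j)^* * ip w (a j - proj b (a j)).
  rewrite {2}/w ipsumr; apply: eq_bigr => j _.
  by rewrite ipZr ipBr wp subr0.
have e2 : ip w w <= p%:R * rho * ip w w.
  rewrite -{1}[ip w w]ger0_norm ?ip_ge0 // {1}e1.
  apply: le_trans (ler_norm_sum _ _ _) _.
  have -> : p%:R * rho * ip w w = \sum_(j < p) (nm w * nm w * rho).
    by rewrite sumr_const card_ord -nm_sq expr2 -mulr_natl; ring.
  apply: ler_sum => j _.
  rewrite normrM norm_conjC -wa.
  apply: le_trans (ler_wpM2r (normr_ge0 _) (CS _ _)) _.
  have -> : nm (a j) = 1 by rewrite /nm ha eqxx sqrtC1.
  rewrite mulr1 -mulrA; apply: ler_wpM2l; first exact: nm_ge0.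
  by apply: le_trans (CS _ _) _; rewrite ler_wpM2l ?nm_ge0.
have w0 : ip w w = 0.
  apply/eqP; rewrite eq_le ip_ge0 andbT; apply/negP => /negP.
  rewrite -real_ltNge ?ip_real ?real0 // => wpos.
  have h1 : p%:R * rho * ip w w < 1 * ip w w by rewrite ltr_pM2r.
  by have := le_lt_trans e2 h1; rewrite mul1r ltxx.
have := ip_eq0 w0 => w00.
apply/negP: al0; rewrite negbK; apply/eqP/rowP => j.
by rewrite mxE -wa w00 ip0l.
Qed.

Lemma unit_ip e : e != 0 -> ip ((nm e)^-1 *: e) ((nm e)^-1 *: e) = 1.
Proof.
move=> e0; have ne : nm e != 0 by apply/eqP => /nm_eq0; apply/eqP.
rewrite ipZl ipZr -nm_sq fmorphV /= (conj_Creal (nm_real e)).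
by field.
Qed.

Definition subspace (S : U -> Prop) := S 0 /\ forall a x y, S x -> S y -> S (a *: x + y).

Lemma subspace_sum (S : U -> Prop) (I : Type) (s : seq I) (P : pred I) (F : I -> U) :
  subspace S -> (forall k, P k -> S (F k)) -> S (\sum_(k <- s | P k) F k).
Proof.
move=> [S0 Sl] hF; elim/big_rec: _ => // k x Pk Sx.
by rewrite -[F k]scale1r; apply: Sl => //; apply: hF.
Qed.

Lemma subspaceZ (S : U -> Prop) a x : subspace S -> S x -> S (a *: x).
Proof. by move=> [S0 Sl] Sx; rewrite -[_ *: _]addr0; apply: Sl. Qed.

Lemma subspaceB (S : U -> Prop) x y : subspace S -> S x -> S y -> S (x - y).
Proof.
by move=> [S0 Sl] Sx Sy; rewrite addrC -scaleN1r; apply: Sl.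
Qed.

Lemma ON_ext b x : ON b -> x != proj b x ->
  ON ((nm (x - proj b x))^-1 *: (x - proj b x) :: b).
Proof.
move=> [ub hb] hx.
set r := x - proj b x; set u := _ *: r.
have r0 : r != 0 by rewrite subr_eq0.
have uu := unit_ip r0.
have uy : forall y, y \in b -> ip u y = 0.
  by move=> y yb; rewrite ipZl ip_res ?mulr0 //; split.
have yu : forall y, y \in b -> ip y u = 0.
  by move=> y yb; rewrite ipC uy // conjC0.
have ub' : u \notin b.
  by apply/negP => /uy; rewrite uu => /eqP; rewrite oner_eq0.
split; first by rewrite /= ub' ub.
move=> y y'; rewrite !inE => /orP[/eqP->|yb] /orP[/eqP->|y'b].
- by rewrite uu eqxx.
- rewrite uy // (_ : (u == y') = false) //; apply/negP => /eqP e.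
  by move: ub'; rewrite e y'b.
- rewrite yu // (_ : (y == u) = false) //; apply/negP => /eqP e.
  by move: ub'; rewrite -e yb.
- exact: hb.
Qed.

Lemma ON_cat b1 b2 : ON b1 -> ON b2 ->
  (forall y1 y2, y1 \in b1 -> y2 \in b2 -> ip y1 y2 = 0) -> ON (b1 ++ b2).
Proof.
move=> [u1 h1] [u2 h2] h12.
have disj : forall y, y \in b1 -> y \in b2 -> False.
  by move=> y y1 y2; have := h12 _ _ y1 y2; rewrite h1 // eqxx => /eqP; rewrite oner_eq0.
split.
  rewrite cat_uniq u1 u2 andbT /=; apply/hasPn => y y2; apply/negP => y1.
  exact: disj y1 y2.
move=> y y'; rewrite !mem_cat => /orP[y1|y2] /orP[y1'|y2'].
- exact: h1.
- rewrite h12 // (_ : (y == y') = false) //; apply/negP => /eqP e.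
  by apply: (disj y') => //; rewrite -e.
- rewrite ipC h12 // conjC0 (_ : (y == y') = false) //; apply/negP => /eqP e.
  by apply: (disj y) => //; rewrite e.
- exact: h2.
Qed.

Lemma ON_cons u b : ON b -> ip u u = 1 -> (forall y, y \in b -> ip u y = 0) -> ON (u :: b).
Proof.
move=> hb uu ub; apply: (@ON_cat [:: u] b) => //.
  by split => // y y'; rewrite !inE => /eqP-> /eqP->; rewrite eqxx.
by move=> y1 y2; rewrite inE => /eqP->; apply: ub.
Qed.

Lemma proj0 b e : (forall y, y \in b -> ip e y = 0) -> proj b e = 0.
Proof.
by move=> h; rewrite /proj big_seq big1 // => y yb; rewrite h // scale0r.
Qed.

Lemma proj_cat b1 b2 e : proj (b1 ++ b2) e = proj b1 e + proj b2 e.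
Proof. by rewrite /proj big_cat. Qed.

Lemma max_ON (S : U -> Prop) m : subspace S ->
  (forall b, ON b -> (forall y, y \in b -> S y) -> (size b <= m)%N) ->
  exists b, [/\ ON b, (forall y, y \in b -> S y) & (forall x, S x -> x = proj b x)].
Proof.
move=> hS hm.
pose P n := exists b, [/\ ON b, (forall y, y \in b -> S y) & size b = n].
have P0 : P 0%N by exists [::]; split => //; split.
have [n [[b [hb bS sb]] nmax]] := ex_max P0 (fun n '(ex_intro b (And3 h1 h2 h3)) =>
   eq_ind _ (fun k => (k <= m)%N) (hm b h1 h2) _ h3).
exists b; split => // x Sx; apply/eqP; apply/negP => /negP hx.
have : P n.+1.
  exists ((nm (x - proj b x))^-1 *: (x - proj b x) :: b); split.
  - exact: ON_ext.
  - move=> y; rewrite inE => /orP[/eqP->|]; last exact: bS.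
    apply: subspaceZ => //; apply: subspaceB => //.
    by rewrite /proj big_seq; apply: subspace_sum => // y0 yb; apply: subspaceZ => //; apply: bS.
  - by rewrite /= sb.
by move/nmax; rewrite ltnn.
Qed.
End IP.
Lemma num11 (F : numDomainType) (x e : F) : 0 <= x -> 0 < e ->
  x ^+ 2 <= 3%:R * e * x + 2%:R * e ^+ 2 -> x <= 4%:R * e.
Proof.
move=> x0 e0 h.
have e4 : 0 < 4%:R * e by rewrite mulr_gt0 ?ltr0n.
rewrite real_leNgt ?ger0_real ?(ltW e4) //; apply/negP => hx.
have xpos : 0 < x := lt_trans e4 hx.
have s1 : 3%:R * e * x + 2%:R * e ^+ 2 <= 3%:R * e * x + 4%:R * e ^+ 2.
  by rewrite lerD2l ler_wpM2r ?exprn_ge0 ?ler_nat ?ltW.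
have s2 : 3%:R * e * x + 4%:R * e ^+ 2 < 3%:R * e * x + e * x.
  by rewrite ltrD2l expr2 mulrA [4%:R * e]mulrC -mulrA ltr_pM2l.
have s3 : 3%:R * e * x + e * x = 4%:R * e * x by ring.
have s4 : 4%:R * e * x < x ^+ 2 by rewrite expr2 ltr_pM2r.
rewrite s3 in s2.
by have := le_lt_trans h (le_lt_trans s1 (lt_trans s2 s4)); rewrite ltxx.
Qed.

Lemma bnd_a (F : numDomainType) (lam del mu t z : F) : 0 < del ->
  `|mu - lam| < del -> 3%:R * del < `|t - lam| -> z = lam + del ->
  t != mu /\ `|z - t| <= 2%:R * `|t - mu|.
Proof.
move=> d0 hmu ht ->.
have tri : `|t - lam| <= `|t - mu| + `|mu - lam|.
  by rewrite (_ : t - lam = (t - mu) + (mu - lam)) ?ler_normD //; ring.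
have c2 : 2%:R * del < `|t - mu|.
  have h0 : `|t - mu| + `|mu - lam| < `|t - mu| + del by rewrite ltrD2l.
  have h1 : 3%:R * del < `|t - mu| + del := lt_trans ht (le_lt_trans tri h0).
  by move: h1; rewrite (_ : 3%:R * del = 2%:R * del + del) ?ltrD2r //; ring.
split.
  apply/negP => /eqP e; move: c2; rewrite e subrr normr0 => c2.
  have h : 0 < 2%:R * del by rewrite mulr_gt0 ?ltr0n.
  by have := lt_trans h c2; rewrite ltxx.
have h2 : `|lam + del - mu| < 2%:R * del.
  rewrite (_ : lam + del - mu = del + (lam - mu)); last by ring.
  apply: le_lt_trans (ler_normD _ _) _.
  rewrite (gtr0_norm d0) [`|lam - mu|]distrC (_ : 2%:R * del = del + del); last by ring.
  by rewrite ltrD2l.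
rewrite (_ : lam + del - t = (lam + del - mu) + (mu - t)); last by ring.
apply: le_trans (ler_normD _ _) _.
rewrite [`|mu - t|]distrC (_ : 2%:R * `|t - mu| = `|t - mu| + `|t - mu|); last by ring.
by rewrite lerD2r ltW // (lt_trans h2 c2).
Qed.

Lemma bnd_b (F : numDomainType) (lam del t z : F) : 0 < del ->
  del <= `|t - lam| -> z = lam + del ->
  t != lam /\ `|z - t| <= 2%:R * `|t - lam|.
Proof.
move=> d0 ht ->; split.
  apply/negP => /eqP e; move: ht; rewrite e subrr normr0 => ht.
  by have := lt_le_trans d0 ht; rewrite ltxx.
rewrite (_ : lam + del - t = del + (lam - t)); last by ring.
apply: le_trans (ler_normD _ _) _.
rewrite (gtr0_norm d0) (_ : 2%:R * `|t - lam| = `|t - lam| + `|t - lam|); last by ring.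
rewrite [`|lam - t|]distrC.
by rewrite lerD2r.
Qed.

Lemma choose_fun (T : eqType) (s : seq T) (Q : T -> nat -> Prop) :
  (forall x, x \in s -> exists k, Q x k) -> exists gm : T -> nat, forall x, x \in s -> Q x (gm x).
Proof.
elim: s => [|x s IH] h; first by exists (fun _ => 0%N).
have [k hk] := h x (mem_head _ _).
have [gm hgm] := IH (fun y ys => h y (@mem_behead _ (x :: s) _ ys)).
exists (fun y => if y == x then k else gm y) => y; rewrite inE.
by case: eqP => [->|_] //= /hgm.
Qed.

Section Eig.
Variables (R : realType) (V W : lmodType R[i]) (ipW : W -> W -> R[i]).
Variable (i : {linear V -> W}).
Hypothesis HipW : is_inner_product ipW.
Hypothesis inj_i : injective i.

Definition ipv (x y : V) := ipW (i x) (i y).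

Lemma ipv_inner : is_inner_product ipv.
Proof.
split.
- by move=> a x y z; rewrite /ipv linearD linearZ ipDZl.
- by move=> x y; rewrite /ipv ipC.
- by move=> x; rewrite /ipv; apply: (ip_ge0 HipW).
- move=> x /(ip_eq0 HipW) h; apply: inj_i; by rewrite h linear0.
Qed.
Let Hv := ipv_inner.

Variable A : {linear V -> W}.
Hypothesis symA : forall u w, ipW (A u) (i w) = ipW (i u) (A w).

Lemma eig_real e t : A e = t *: i e -> e != 0 -> t^* = t.
Proof.
move=> he e0.
have := symA e e; rewrite he ipZl // ipZr // => /eqP.
rewrite -subr_eq0 -mulrBl mulf_eq0 => /orP[|/eqP h].
  by rewrite subr_eq0 => /eqP.
by move: e0; rewrite (ip_eq0 Hv h) eqxx.
Qed.

Lemma eig_orth e f t s : A e = t *: i e -> A f = s *: i f -> t != s -> ipv e f = 0.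
Proof.
move=> he hf ts.
have [->|f0] := eqVneq f 0; first by rewrite (ip0r Hv).
have sr := eig_real hf f0.
have := symA e f; rewrite he hf ipZl // ipZr // sr => /eqP.
rewrite -subr_eq0 -mulrBl mulf_eq0 subr_eq0 (negPf ts) /= => /eqP.
done.
Qed.

Lemma eig_rel x v e z mu t : z *: i x - A x = (z - mu) *: i v ->
  A e = t *: i e -> e != 0 -> (z - t) * ipv x e = (z - mu) * ipv v e.
Proof.
move=> hx he e0.
have := congr1 (fun w => ipW w (i e)) hx; rewrite /= ipBl // ipZl // symA he ipZr //.
rewrite (eig_real he e0) ipZl // => <-.
by rewrite /ipv mulrBl.
Qed.

Lemma orth_sums n (f : 'I_n -> V) (t : 'I_n -> R[i]) (P Q : pred 'I_n) (c d : 'I_n -> R[i]) :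
  (forall k, A (f k) = t k *: i (f k)) ->
  (forall k l, P k -> Q l -> t k != t l) ->
  ipv (\sum_(k | P k) c k *: f k) (\sum_(l | Q l) d l *: f l) = 0.
Proof.
move=> hf hPQ; rewrite (ipsuml Hv) big1 // => k Pk.
rewrite (ipsumr Hv) big1 // => l Ql.
by rewrite ipZl // ipZr // (eig_orth (hf k) (hf l) (hPQ _ _ Pk Ql)) !mulr0.
Qed.

Lemma pyth x y : ipv x y = 0 -> ipv (x + y) (x + y) = ipv x x + ipv y y.
Proof. by move=> h; rewrite (ip_expand Hv) h conjC0 !addr0. Qed.

Lemma mult_lemma n (f : 'I_n -> V) (t c : 'I_n -> R[i]) (psi : R[i] -> R[i]) (M : R[i])
  (P : pred 'I_n) :
  (forall k, A (f k) = t k *: i (f k)) -> 0 <= M ->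
  (forall k, P k -> `|psi (t k)| <= M) ->
  ipv (\sum_(k | P k) (c k * psi (t k)) *: f k) (\sum_(k | P k) (c k * psi (t k)) *: f k)
  <= M ^+ 2 * ipv (\sum_(k | P k) c k *: f k) (\sum_(k | P k) c k *: f k).
Proof.
move=> hf M0 hpsi.
move: {2}#|P| (leqnn #|P|) => N; elim: N P hpsi => [|N IH] P hpsi hc.
  move: hc; rewrite leqn0 => /eqP/card0_eq P0.
  have P0' : P =1 xpred0 by move=> k; have := P0 k; rewrite !inE.
  by rewrite !big_pred0 // (ip0l Hv) mulr0.
case: (pickP P) => [k0 Pk0|P0]; last by rewrite !big_pred0 // (ip0l Hv) mulr0.
set t0 := t k0.
pose Q1 := [pred k | P k && (t k == t0)].
pose Q2 := [pred k | P k && (t k != t0)].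
have c2 : (#|Q2| <= N)%N.
  have : (#|Q2| < #|P|)%N.
    rewrite (cardD1 k0 P) (_ : k0 \in P = true) ?add1n ?ltnS; last exact: Pk0.
    apply: subset_leq_card.
    apply/subsetP => k; rewrite !inE => /andP[Pk tk].
    rewrite (_ : k \in P = true) ?andbT; last exact: Pk.
    by apply: contraNneq tk => ->; rewrite eqxx.
  by move=> h; rewrite -ltnS; apply: leq_trans h hc.
have IH2 := IH Q2 (fun k hk => hpsi k (andP hk).1) c2.
have split_sum : forall d : 'I_n -> R[i], \sum_(k | P k) d k *: f k =
    \sum_(k | Q1 k) d k *: f k + \sum_(k | Q2 k) d k *: f k.
  by move=> d; rewrite (bigID (fun k => t k == t0)).
have orth12 : forall d d' : 'I_n -> R[i],
    ipv (\sum_(k | Q1 k) d k *: f k) (\sum_(k | Q2 k) d' k *: f k) = 0.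
  move=> d d'; apply: orth_sums => // k l /andP[_ /eqP->] /andP[_].
  by rewrite eq_sym.
have e1 : \sum_(k | Q1 k) (c k * psi (t k)) *: f k = psi t0 *: \sum_(k | Q1 k) c k *: f k.
  rewrite scaler_sumr; apply: eq_bigr => k /andP[_ /eqP->].
  by rewrite scalerA mulrC.
rewrite !split_sum !pyth ?orth12 // e1 ipZl // ipZr // mulrA -normCK.
rewrite mulrDr lerD //.
apply: ler_wpM2r; first exact: ip_ge0.
by rewrite ler_sqr ?nnegrE ?normr_ge0 // hpsi.
Qed.

Lemma close (T : pred R[i]) (b : seq V) v d z mu eps :
  pure_point ipW i A ->
  ON ipv b -> (forall y, y \in b -> exists2 t, T t & A y = t *: i y) ->
  (forall e t, T t -> A e = t *: i e -> e = proj ipv b e) ->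
  (forall e t, ~~ T t -> A e = t *: i e -> e != 0 -> (t - mu) * ipv v e = (z - t) * ipv d e) ->
  (forall e t, ~~ T t -> A e = t *: i e -> e != 0 -> t != mu /\ `|z - t| <= 2%:R * `|t - mu|) ->
  0 < eps -> nm ipv d <= eps ->
  nm ipv (v - proj ipv b v) <= 4%:R * eps.
Proof.
move=> ppA hb bT bspan hrel hbnd e0 hd.
set r := v - proj ipv b v.
have [n [f [tt [c [hf ha]]]]] := ppA (i r) eps e0.
set a := \sum_(k < n) c k *: f k.
have ia : i a = \sum_(k < n) c k *: i (f k).
  by rewrite /a linear_sum; apply: eq_bigr => k _; rewrite linearZ.
have hra : nm ipv (r - a) < eps.
  rewrite /nm /ipv linearB /= ia; exact: ha.
pose P := fun k => ~~ T (tt k) && (f k != 0).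
pose h := \sum_(k | T (tt k)) c k *: f k.
pose g := \sum_(k | P k) c k *: f k.
have ahg : a = h + g.
  rewrite /a (bigID (fun k => T (tt k))) /=; congr (_ + _).
  rewrite (bigID (fun k => f k != 0)) /= [X in _ + X]big1 ?addr0 //.
  by move=> k /andP[_ /negPn/eqP ->]; rewrite scaler0.
pose psi := fun t => ((z - t) / (t - mu))^*.
pose g' := \sum_(k | P k) (c k * psi (tt k)) *: f k.
have tT : forall t t', T t -> ~~ T t' -> t != t'.
  by move=> t t' Tt nT; apply: contraNneq nT => <-.
have rh : ipv r h = 0.
  rewrite (ipsumr Hv) big1 // => k Tk; rewrite (ipZr Hv) (ip_res_span Hv) ?mulr0 //.
  exact: bspan (hf k).
have hg : ipv h g = 0.
  by rewrite /h /g; apply: (orth_sums _ _ hf) => k l Tk /andP[nT _]; apply: tT.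
have pg : ipv (proj ipv b v) g = 0.
  rewrite /proj (ipsuml Hv) big_seq big1 // => y yb; rewrite (ipZl Hv).
  have [ty Tty hy] := bT y yb.
  rewrite (ipsumr Hv) big1 ?mulr0 // => k /andP[nT _].
  by rewrite (ipZr Hv) (eig_orth hy (hf k)) ?mulr0 // tT.
have vg : ipv v g = ipv d g'.
  rewrite !(ipsumr Hv); apply: eq_bigr => k /andP[nT fk0].
  rewrite !(ipZr Hv) rmorphM /= /psi conjCK.
  have [tm _] := hbnd _ _ nT (hf k) fk0.
  have hr := hrel _ _ nT (hf k) fk0.
  have tm' : tt k - mu != 0 by rewrite subr_eq0.
  have -> : ipv v (f k) = (z - tt k) / (tt k - mu) * ipv d (f k).
    apply: (mulfI tm'); rewrite hr; field => //.
  by rewrite mulrA.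
have g'g : ipv g' g' <= 2%:R ^+ 2 * ipv g g.
  apply: (mult_lemma c hf); first by rewrite ler0n.
  move=> k /andP[nT fk0]; have [tm hz] := hbnd _ _ nT (hf k) fk0.
  have tm' : 0 < `|tt k - mu| by rewrite normr_gt0 subr_eq0.
  by rewrite /psi norm_conjC normrM normfV ler_pdivrMr.
have ngg : nm ipv g <= nm ipv a.
  rewrite -ler_sqr ?nnegrE ?nm_ge0 // !nm_sq // ahg pyth // lerDr; exact: ip_ge0.
have nar : nm ipv a <= nm ipv r + eps.
  have -> : a = r - (r - a) by rewrite opprB addrC subrK.
  by apply: le_trans (nmB Hv _ _) _; rewrite lerD2l ltW.
have ng' : nm ipv g' <= 2%:R * nm ipv g.
  rewrite -ler_sqr ?nnegrE ?mulr_ge0 ?ler0n ?nm_ge0 // exprMn !nm_sq //.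
have err : ipv r r = ipv d g' + ipv r (r - a).
  have -> : ipv r r = ipv r a + ipv r (r - a) by rewrite -(ipDr Hv) addrC subrK.
  congr (_ + _).
  by rewrite ahg (ipDr Hv) rh add0r /r (ipBl Hv) pg subr0.
have fin : nm ipv r ^+ 2 <= 3%:R * eps * nm ipv r + 2%:R * eps ^+ 2.
  rewrite nm_sq // -[ipv r r]ger0_norm ?ip_ge0 // err.
  apply: le_trans (ler_normD _ _) _.
  have s1 : `|ipv d g'| <= 2%:R * eps * (nm ipv r + eps).
    apply: le_trans (CS Hv _ _) _.
    have -> : 2%:R * eps * (nm ipv r + eps) = eps * (2%:R * (nm ipv r + eps)) by ring.
    apply: ler_pM => //; try exact: nm_ge0.
    apply: le_trans ng' _; rewrite ler_wpM2l ?ler0n //.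
    exact: le_trans ngg nar.
  have s2 : `|ipv r (r - a)| <= nm ipv r * eps.
    apply: le_trans (CS Hv _ _) _; rewrite ler_wpM2l ?nm_ge0 // ltW //.
  apply: le_trans (lerD s1 s2) _.
  by rewrite le_eqVlt; apply/orP; left; apply/eqP; ring.
exact: num11 (nm_ge0 Hv _) e0 fin.
Qed.
End Eig.

Unset Implicit Arguments.
Set Strict Implicit.

Theorem theoremt (R : realType)
  (V W : lmodType R[i]) (ipV : V -> V -> R[i]) (ipW : W -> W -> R[i])
  (i : {linear V -> W})
  (L : {linear V -> W}) (LN : nat -> {linear V -> W})
  (lambda delta : R[i]) (m : nat) :
  (* Hilbert spaces V ⊂ W, bounded dense inclusion, V separable *)
  is_hilbert ipV -> is_hilbert ipW -> injective i ->
  bounded_op ipV ipW i -> dense_range ipW i -> separable ipV ->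
  (* the operators *)
  bounded_op ipV ipW L -> self_adjoint ipW i L -> pure_point ipW i L ->
  (forall N, bounded_op ipV ipW (LN N)) ->
  (forall N, self_adjoint ipW i (LN N)) ->
  (forall N, pure_point ipW i (LN N)) ->
  (* lambda an eigenvalue of finite geometric multiplicity m *)
  is_eigenvalue i L lambda -> geom_mult i L lambda m ->
  (* isolation of lambda in the spectrum *)
  0 < delta ->
  (forall z, in_spectrum ipW i L z -> z != lambda -> 3%:R * delta < `|z - lambda|) ->
  (* invertibility of z - L_N on the annulus for large N *)
  (exists N0 : nat, forall N : nat, (N0 < N)%N -> forall z : R[i],
     delta <= `|z - lambda| <= 2%:R * delta -> invertible_at ipW i (LN N) z) ->
  (* uniform convergence of the two resolvent expressions *)
  (forall eps : R[i], 0 < eps -> exists N1 : nat, forall N : nat, (N1 < N)%N ->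
     forall z : R[i], delta <= `|z - lambda| <= 2%:R * delta ->
       (forall (mu : R[i]) (v : V), `|mu - lambda| <= delta ->
          LN N v = mu *: i v -> hnorm ipW (i v) = 1 ->
          forall y : V, shiftop i L z y = L v - LN N v ->
            hnorm ipW (i y) < eps) /\
       (forall (mu : R[i]) (u : V), `|mu - lambda| <= delta ->
          L u = mu *: i u -> hnorm ipW (i u) = 1 ->
          forall y : V, shiftop i (LN N) z y = L u - LN N u ->
            hnorm ipW (i y) < eps)) ->
  exists N0' : nat, forall N : nat, (N0' < N)%N ->
    exists s : seq R[i],
      uniq s /\
      (forall mu : R[i], mu \in s <-> (is_eigenvalue i (LN N) mu /\ `|mu - lambda| < delta)) /\
      exists gm : R[i] -> nat,
        (forall mu : R[i], mu \in s -> geom_mult i (LN N) mu (gm mu)) /\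
        (\sum_(mu <- s) gm mu)%N = m.
Proof.
move=> hV hW inj_i bi dense sep bL saL ppL bN saN ppN eigL gmL d0 isoL [N0 hinv] hconv.
have HipW : is_inner_product ipW := hW.1.
have Hv := ipv_inner HipW inj_i.
set ip := ipv ipW i.
have symL := saL.1.
pose SE := fun e : V => L e = lambda *: i e.
have subS : forall (A : {linear V -> W}) t, subspace (fun e => A e = t *: i e).
  move=> A t; split; first by rewrite (linear0 A) (linear0 i) scaler0.
  move=> a x y hx hy; rewrite (linearP A) (linearP i) /= hx hy scalerDr !scalerA mulrC.
  done.
have [gm1 gm2] := gmL.
have boundE : forall b, ON ip b -> (forall y, y \in b -> SE y) -> (size b <= m)%N.
  move=> b hb bS; rewrite leqNgt; apply/negP => mb.
  apply: (gm2 (fun k : 'I_m.+1 => nth 0 b k)).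
  - by move=> k; apply: bS; apply: mem_nth; exact: leq_trans (ltn_ord k) mb.
  - by move: (ON_indep Hv hb mb).
have [bE [hbE bES bEspan]] := max_ON Hv (subS L lambda) boundE.
have sbE : size bE = m.
  apply/eqP; rewrite eqn_leq boundE //= leqNgt; apply/negP => sm.
  have [f [fe find]] := gm1.
  by apply: (LA1 hbE sm _ find) => j; apply: bEspan; apply: fe.
pose eps : R[i] := (8%:R * (m.+1)%:R)^-1.
have eps0 : 0 < eps by rewrite invr_gt0 mulr_gt0 ?ltr0n.
have epsm : (m.+1)%:R * (4%:R * eps) < 1.
  have m0 : (m.+1)%:R != 0 :> R[i] by rewrite pnatr_eq0.
  have -> : (m.+1)%:R * (4%:R * eps) = (2%:R)^-1 :> R[i].
    by rewrite /eps; field; rewrite addrC natr1 pnatr_eq0.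
  by rewrite invf_lt1 ?ltr0n // ltr1n.
have epsm' : m%:R * (4%:R * eps) < 1.
  apply: le_lt_trans epsm; rewrite ler_wpM2r ?ler_nat //.
  by rewrite mulr_ge0 ?ler0n ?ltW.
have [N1 hN1] := hconv eps eps0.
exists (maxn N0 N1) => N hN.
have hN0 : (N0 < N)%N by lia.
have hN1' : (N1 < N)%N by lia.
pose z := lambda + delta.
have zl : z - lambda = delta by rewrite /z addrAC subrr add0r.
have hz : delta <= `|z - lambda| <= 2%:R * delta.
  rewrite zl ger0_norm; last exact: ltW.
  by apply/andP; split => //; rewrite mulr_natl mulr2n lerDl ltW.
have invL : invertible_at ipW i L z.
  apply: NNPP => hni.
  have zl' : z != lambda by rewrite -subr_eq0 zl; apply: lt0r_neq0.
  have := isoL z hni zl'; rewrite zl ger0_norm ?ltW //.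
  have : delta < 3%:R * delta.
    by rewrite -{1}[delta]mul1r ltr_pM2r // ltr1n.
  by move=> h1 h2; have := lt_trans h1 h2; rewrite ltxx.
have [gL [_ [cL _]]] := invL.
have [gN [_ [cN _]]] := hinv N hN0 z hz.
have [conv1 conv2] := hN1 N hN1' z hz.
have symN := (saN N).1.
have factA : forall v mu, `|mu - lambda| < delta -> LN N v = mu *: i v -> ip v v = 1 ->
    nm ip (v - proj ip bE v) <= 4%:R * eps.
  move=> v mu hmu hv vv.
  set y := gL (L v - LN N v).
  have sy : shiftop i L z y = L v - LN N v := cL _.
  have hy : hnorm ipW (i y) < eps.
    apply: (conv1 mu v (ltW hmu) hv _ y sy).
    by rewrite /hnorm; change (sqrtC (ip v v) = 1); rewrite vv sqrtC1.
  apply: (close HipW inj_i symL (T := fun t => t == lambda) (d := y) (z := z) (mu := mu) ppL hbE).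
  - by move=> y0 y0b; exists lambda => //; exact: bES.
  - by move=> e t /eqP -> he; exact: bEspan.
  - move=> e t nT he e0.
    have hx : z *: i (v + y) - L (v + y) = (z - mu) *: i v.
      move: sy; rewrite /shiftop hv (linearD i) (linearD L) => sy.
      rewrite scalerDr (_ : z *: i v + z *: i y - (L v + L y) = z *: i v - L v + (z *: i y - L y)).
        by rewrite sy scalerBl addrA subrK.
      by rewrite opprD !addrA; congr (_ + _); rewrite addrAC.
    have := eig_rel HipW inj_i symL hx he e0.
    rewrite (ipDl Hv) => h.
    have -> : (z - t) * ip y e = (z - t) * (ip v e + ip y e) - (z - t) * ip v e by ring.
    by rewrite h /ip; ring.
  - move=> e t nT he e0.
    have hspec : in_spectrum ipW i L t.
      move=> [g [cg _]]; apply/negP: e0; rewrite negbK; apply/eqP.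
      have h1 : shiftop i L t e = 0 by rewrite /shiftop he subrr.
      have h0 : shiftop i L t 0 = 0 by rewrite /shiftop (linear0 i) (linear0 L) scaler0 subrr.
      by rewrite -(cg e) -(cg 0) h1 h0.
    exact: bnd_a d0 hmu (isoL t hspec nT) (erefl z).
  - exact: eps0.
  - exact: ltW hy.
have factB : forall u, SE u -> ip u u = 1 -> forall b, ON ip b ->
    (forall y, y \in b -> exists2 t, `|t - lambda| < delta & LN N y = t *: i y) ->
    (forall e t, `|t - lambda| < delta -> LN N e = t *: i e -> e = proj ip b e) ->
    nm ip (u - proj ip b u) <= 4%:R * eps.
  move=> u hu uu b hb bT bsp.
  set y := gN (L u - LN N u).
  have sy : shiftop i (LN N) z y = L u - LN N u := cN _.
  have hy : hnorm ipW (i y) < eps.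
    apply: (conv2 lambda u _ hu _ y sy).
      by rewrite subrr normr0 ltW.
    by rewrite /hnorm; change (sqrtC (ip u u) = 1); rewrite uu sqrtC1.
  apply: (close HipW inj_i symN (T := fun t => `|t - lambda| < delta) (d := - y) (z := z) (mu := lambda) (ppN N) hb) => //.
  - move=> e t nT he e0.
    have hx : z *: i (u - y) - LN N (u - y) = (z - lambda) *: i u.
      move: sy; rewrite /shiftop hu (linearB i) (linearB (LN N)) => sy.
      rewrite scalerBr (_ : z *: i u - z *: i y - (LN N u - LN N y) = z *: i u - LN N u - (z *: i y - LN N y)).
        by rewrite sy opprB addrA subrK scalerBl.
      by rewrite !opprB !addrA ac4.
    have := eig_rel HipW inj_i symN hx he e0.
    rewrite (ipBl Hv) (ipNl Hv) => h.
    have -> : (z - t) * - ip y e = (z - t) * (ip u e - ip y e) - (z - t) * ip u e by ring.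
    by rewrite h /ip; ring.
  - move=> e t nT he e0.
    have ht : delta <= `|t - lambda|.
      by rewrite real_leNgt ?normr_real ?(gtr0_real d0) //; exact: nT.
    exact: bnd_b d0 ht (erefl z).
  - by rewrite (nmN Hv); exact: ltW hy.
have factC : forall b, ON ip b ->
    (forall y, y \in b -> exists2 t, `|t - lambda| < delta & LN N y = t *: i y) ->
    (size b <= m)%N.
  move=> b hb bT; rewrite leqNgt; apply/negP => mb.
  suff : (m.+1 <= size bE)%N by rewrite sbE ltnn.
  apply: (@counting _ _ _ Hv m.+1 (fun k : 'I_m.+1 => nth 0 b k) bE (4%:R * eps) hbE) => //.
  - move=> j k; rewrite -/ip hb.2 ?mem_nth ?(leq_trans (ltn_ord _) mb) //.
    by rewrite nth_uniq ?(leq_trans (ltn_ord _) mb) //; case: hb.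
  - move=> j; have jb : nth 0 b j \in b by rewrite mem_nth ?(leq_trans (ltn_ord _) mb).
    have [t ht hy] := bT _ jb.
    by apply: factA ht hy _; rewrite hb.2 ?eqxx.
pose DE := fun mu => is_eigenvalue i (LN N) mu /\ `|mu - lambda| < delta.
have mkON : forall s, uniq s -> (forall mu, mu \in s -> DE mu) -> exists b,
    [/\ ON ip b, size b = size s & forall y, y \in b -> exists2 t, t \in s & LN N y = t *: i y].
  elim => [|mu s IH] /= us hs.
    by exists [::]; split => //; split.
  case/andP: us => mus us.
  have [b [hb sb bs]] := IH us (fun x xs => hs x (@mem_behead _ (mu :: s) _ xs)).
  have [[e [e0 he]] _] := hs mu (mem_head _ _).
  set u := (nm ip e)^-1 *: e.
  have hu : LN N u = mu *: i u by rewrite /u !linearZ /= he scalerA mulrC -scalerA.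
  exists (u :: b); split.
  - apply: (ON_cons Hv hb (unit_ip Hv e0)) => y yb.
    have [t ts hy] := bs y yb.
    apply: (eig_orth HipW inj_i symN hu hy).
    by apply: contraNneq mus => ->.
  - by rewrite /= sb.
  - move=> y; rewrite inE => /orP[/eqP->|yb].
      by exists mu => //; exact: mem_head.
    have [t ts hy] := bs y yb.
    by exists t => //; rewrite inE ts orbT.
have boundS : forall s, uniq s -> (forall mu, mu \in s -> DE mu) -> (size s <= m)%N.
  move=> s us hs; have [b [hb <- bs]] := mkON s us hs.
  apply: factC hb _ => y yb; have [t ts hy] := bs y yb.
  by exists t => //; exact: (hs t ts).2.
pose Ps := fun n => exists s, [/\ uniq s, (forall mu, mu \in s -> DE mu) & size s = n].
have Ps0 : Ps 0%N by exists [::].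
have Psm : forall n, Ps n -> (n <= m)%N.
  by move=> n [s [us hs <-]]; exact: boundS.
have [n [[s [us hs ss]] nmax]] := ex_max Ps0 Psm.
have sE : forall mu, mu \in s <-> DE mu.
  move=> mu; split; first exact: hs.
  move=> hmu; apply/negPn/negP => nmu.
  have : Ps n.+1.
    exists (mu :: s); split => //=; first by rewrite nmu us.
      by move=> x; rewrite inE => /orP[/eqP->//|]; exact: hs.
    by rewrite ss.
  by move/nmax; rewrite ltnn.
pose Q := fun mu k => exists b, [/\ ON ip b, size b = k,
  (forall y, y \in b -> LN N y = mu *: i y) & (forall e, LN N e = mu *: i e -> e = proj ip b e)].
have hQ : forall mu, mu \in s -> exists k, Q mu k.
  move=> mu mus; have dmu := hs mu mus.
  have bnd : forall b, ON ip b -> (forall y, y \in b -> LN N y = mu *: i y) -> (size b <= m)%N.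
    move=> b hb bS; apply: factC hb _ => y yb.
    by exists mu; [exact: dmu.2 | exact: bS].
  have [b [hb bS bsp]] := max_ON Hv (subS (LN N) mu) bnd.
  by exists (size b), b.
have [gm hgm] := choose_fun hQ.
have hgeom : forall mu, mu \in s -> geom_mult i (LN N) mu (gm mu).
  move=> mu mus; have [b [hb sb bS bsp]] := hgm mu mus.
  rewrite -sb; split.
  - exists (fun k : 'I_(size b) => nth 0 b k); split.
      by move=> k; apply: bS; exact: mem_nth.
    by move: (ON_indep Hv hb (leqnn _)).
  - move=> f hf; apply: (LA1 hb (ltnSn _)) => j; apply: bsp; exact: hf.
have comb : forall s', uniq s' -> (forall mu, mu \in s' -> mu \in s) -> exists B,
    [/\ ON ip B, size B = (\sum_(mu <- s') gm mu)%N,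
       (forall y, y \in B -> exists2 t, t \in s' & LN N y = t *: i y) &
       (forall e t, t \in s' -> LN N e = t *: i e -> e = proj ip B e)].
  elim => [|mu s' IH] /= us' hsub.
    by exists [::]; split => //; rewrite big_nil.
  case/andP: us' => mus us'.
  have [B [hB sB Bs Bsp]] := IH us' (fun x xs => hsub x (@mem_behead _ (mu :: s') _ xs)).
  have [b [hb sb bS bsp]] := hgm mu (hsub mu (mem_head _ _)).
  have orth : forall y1 y2, y1 \in b -> y2 \in B -> ip y1 y2 = 0.
    move=> y1 y2 y1b y2B; have [t ts hy2] := Bs y2 y2B.
    apply: (eig_orth HipW inj_i symN (bS y1 y1b) hy2).
    by apply: contraNneq mus => ->.
  exists (b ++ B); split.
  - by move: (ON_cat Hv hb hB orth).
  - by rewrite size_cat sb sB big_cons.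
  - move=> y; rewrite mem_cat => /orP[yb|yB].
      by exists mu; [exact: mem_head | exact: bS].
    have [t ts hy] := Bs y yB.
    by exists t => //; rewrite inE ts orbT.
  - move=> e t; rewrite inE => /orP[/eqP->|ts] he; rewrite proj_cat.
      rewrite -bsp // (proj0 (ip := ip)) ?addr0 // => y yB.
      have [t' ts' hy] := Bs y yB.
      apply: (eig_orth HipW inj_i symN he hy).
      by apply: contraNneq mus => ->.
    rewrite -(Bsp e t) // (proj0 (ip := ip)) ?add0r // => y yb.
    apply: (eig_orth HipW inj_i symN he (bS y yb)).
    by apply: contraNneq mus => <-.
have [B [hB sB Bs Bsp]] := comb s us (fun x xs => xs).
exists s; split => //; split => //.
exists gm; split => //.
apply/eqP; rewrite -sB eqn_leq; apply/andP; split.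
  apply: factC hB _ => y yB; have [t ts hy] := Bs y yB.
  by exists t => //; exact: (hs t ts).2.
rewrite -{1}sbE.
apply: (@counting _ _ _ Hv (size bE) (fun k : 'I_(size bE) => nth 0 bE k) B (4%:R * eps) hB).
- move=> j k.
  have jb : nth 0 bE j \in bE by rewrite mem_nth.
  have kb : nth 0 bE k \in bE by rewrite mem_nth.
  have h := hbE.2 _ _ jb kb.
  have ub : uniq bE by case: hbE.
  by rewrite nth_uniq // in h.
- move=> j; have jb : nth 0 bE j \in bE by rewrite mem_nth.
  apply: factB.
  + exact: bES.
  + by have := hbE.2 _ _ jb jb; rewrite eqxx.
  + exact: hB.
  + move=> y yB; have [t ts hy] := Bs y yB.
    by exists t => //; exact: (hs t ts).2.
  + move=> e t ht he.
    have [->|e0] := eqVneq e 0.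
      by rewrite (proj0 (ip := ip)) // => y _; exact: (ip0l Hv).
    apply: (Bsp _ _ _ he); apply/sE; split; [by exists e; split | exact: ht].
- by rewrite sbE.
Qed.
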